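(* Let $\rho$ be a state on $S$ and $\rho'$ a state on $S'$. Suppose either (1) $\mathcal{C}(\rho')\not\subseteq\mathcal{C}(\rho)$, or (2) $\rho'$ is a pure coherent state (i.e., $\rho'$ is pure and not invariant under $e^{-iH_{S'}t}(\cdot)e^{iH_{S'}t}$ for some $t$) and $\rho$ is full rank. Then there is no integer $n\ge1$ and no covariant operation $\Lambda:S^{\otimes n}\to S'$ with $\Lambda(\rho^{\otimes n})=\rho'$. Consequently $\tilde R^0(\rho\to\rho')=0$.
   Context: All systems are finite-dimensional with Hamiltonians; composites carry the sum Hamiltonian. A channel $\Lambda:X\to Y$ is covariant if $\Lambda(e^{-iH_Xt}\sigma e^{iH_Xt})=e^{-iH_Yt}\Lambda(\sigma)e^{iH_Yt}$ for all $\sigma,t$. With $H_X=\sum_kE_k\Pi_k$ (distinct eigenvalues), $\mathcal{D}(\sigma)=\{E_k-E_l:\Pi_k\sigma\Pi_l\ne0\}$ and $\mathcal{C}(\sigma)$ is the set of finite integer linear combinations of elements of $\mathcal{D}(\sigma)$. $\tilde R^0(\rho\to\rho')=\limsup_{n\to\infty}\sup\{r:\exists$ covariant $\Lambda_n:S^{\otimes n}\to S'^{\otimes\lfloor rn\rfloor}$ whose output has every single-copy marginal equal to $\rho'\}$. *)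

(* Defs.v *)
From HB Require Import structures.
From mathcomp Require Import all_boot all_order all_algebra.
From mathcomp Require Import all_classical all_reals.
From mathcomp Require Import ereal topology normedtype sequences exp trigo.
From mathcomp Require Import complex.

Set Implicit Arguments.
Unset Strict Implicit.
Unset Printing Implicit Defensive.

Import Order.TTheory GRing.Theory Num.Theory.
Local Open Scope ring_scope.
Local Open Scope classical_set_scope.

(* A finite-dimensional quantum system, written in an energy eigenbasis:     *)
Record system (R : realType) := Sys {
  sidx : finType;
  energy : sidx -> R }.

Definition op (R : realType) (S : system R) := sidx S -> sidx S -> R[i].

Definition expi (R : realType) (x : R) : R[i] := Complex (cos x) (sin x).

(* e^{-i H t} sigma e^{i H t}, entrywise in the energy eigenbasis:
   (a,b) entry = e^{-i E_a t} sigma_ab e^{i E_b t}. *)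
Definition evolve (R : realType) (S : system R) (t : R) (sigma : op S) : op S :=
  fun a b => expi (- (energy a * t)) * sigma a b * expi (energy b * t).

Definition is_state (R : realType) (S : system R) (sigma : op S) : Prop :=
  [/\ (forall a b, sigma b a = (sigma a b)^*),
      (forall v : sidx S -> R[i],
          0 <= \sum_a \sum_b (v a)^* * sigma a b * v b)
    & \sum_a sigma a a = 1].

Definition is_pure (R : realType) (S : system R) (sigma : op S) : Prop :=
  exists psi : sidx S -> R[i], sigma = fun a b => psi a * (psi b)^*.

Definition coherent (R : realType) (S : system R) (sigma : op S) : Prop :=
  exists t : R, evolve t sigma <> sigma.

Definition full_rank (R : realType) (S : system R) (sigma : op S) : Prop :=
  forall v : sidx S -> R[i], (forall a, \sum_b sigma a b * v b = 0) -> v = (fun _ => 0).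

(* D(sigma) = {E_k - E_l : Pi_k sigma Pi_l <> 0}; in the eigenbasis
   Pi_k sigma Pi_l <> 0 iff sigma a b <> 0 for some a, b with energies E_k, E_l. *)
Definition Dset (R : realType) (S : system R) (sigma : op S) : set R :=
  [set x | exists a b, sigma a b <> 0 /\ x = energy a - energy b].

Definition Cset (R : realType) (S : system R) (sigma : op S) : set R :=
  [set x | exists s : seq (int * R),
      (forall p, p \in s -> Dset sigma p.2) /\
      x = \sum_(p <- s) p.1%:~R * p.2].

Definition is_channel (R : realType) (X Y : system R) (L : op X -> op Y) : Prop :=
  exists (m : nat) (K : 'I_m -> sidx Y -> sidx X -> R[i]),
    (forall a b : sidx X,
        \sum_(k < m) \sum_(c : sidx Y) (K k c a)^* * K k c b = (a == b)%:R) /\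
    (forall sigma : op X, L sigma =
        fun c d => \sum_(k < m) \sum_(a : sidx X) \sum_(b : sidx X)
                     K k c a * sigma a b * (K k d b)^*).

Definition covariant (R : realType) (X Y : system R) (L : op X -> op Y) : Prop :=
  forall (sigma : op X) (t : R), L (evolve t sigma) = evolve t (L sigma).

Definition tens (R : realType) (S : system R) (n : nat) : system R :=
  @Sys R {ffun 'I_n -> sidx S} (fun x => \sum_(i < n) energy (x i)).

Definition tpow (R : realType) (S : system R) (n : nat) (sigma : op S)
  : op (tens S n) :=
  fun x y => \prod_(i < n) sigma (x i) (y i).
Arguments tpow {R S} n sigma.

(* Single-copy marginal on copy j (partial trace over all other copies). *)
Definition marginal (R : realType) (S : system R) (n : nat) (j : 'I_n)
    (omega : op (tens S n)) : op S :=
  fun a b => \sum_(x : {ffun 'I_n -> sidx S} | x j == a)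
             \sum_(y : {ffun 'I_n -> sidx S} |
                     (y j == b) && [forall i, (i != j) ==> (x i == y i)])
               omega x y.

Definition achievable (R : realType) (S S' : system R) (rho : op S) (rho' : op S')
    (n : nat) (r : R) : Prop :=
  0 <= r /\
  exists L : op (tens S n) -> op (tens S' (Num.truncn (r * n%:R))),
    [/\ is_channel L, covariant L
      & forall j : 'I_(Num.truncn (r * n%:R)), marginal j (L (tpow n rho)) = rho'].

Definition rate0 (R : realType) (S S' : system R) (rho : op S) (rho' : op S')
  : \bar R :=
  limn_esup (fun n => ereal_sup [set r%:E | r in achievable rho rho' n]).

(* Main.v *)
Require Import Defs.
From HB Require Import structures.
From mathcomp Require Import all_boot all_order all_algebra.
From mathcomp Require Import all_classical all_reals.
From mathcomp Require Import ereal topology normedtype sequences exp trigo.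
From mathcomp Require Import complex.

Import Order.TTheory GRing.Theory Num.Theory.
Local Open Scope ring_scope.
Local Open Scope classical_set_scope.

From mathcomp Require Import ring lra sesquilinear spectral.
Set Implicit Arguments.
Unset Strict Implicit.
Unset Printing Implicit Defensive.

Section Dev.
Variable R : realType.
Local Notation C := R[i].


Lemma expiD (x y : R) : expi x * expi y = expi (x + y).
Proof.
rewrite /expi cosD sinD; simpc; congr Complex; ring.
Qed.

Lemma expi0 : expi (0:R) = 1.
Proof. by rewrite /expi cos0 sin0. Qed.

Lemma expiNK (x : R) : expi (- x) * expi x = 1.
Proof. by rewrite expiD addNr expi0. Qed.

Lemma expi_eq1 (w : R) : (forall t : R, expi (w * t) = 1) -> w = 0.
Proof.
move=> H; apply/eqP; apply/negPn/negP => hw.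
have := H (pi / 2 / w); rewrite mulrCA divff // mulr1 /expi sin_pihalf => -[_].
by move/eqP; rewrite oner_eq0.
Qed.

Lemma quad_zero (c g : R) : 0 <= g -> (forall s : R, 0 <= s * c + s ^+ 2 * g) -> c = 0.
Proof.
move=> g0 H.
have d0 : 0 < g + 1 by lra.
have := H (- c / (g + 1)).
have -> : (- c / (g + 1)) * c + (- c / (g + 1)) ^+ 2 * g = - (c ^+ 2) / (g+1) ^+ 2.
  by field; lra.
rewrite -mulNr pmulr_lge0 ?exprn_gt0 // ?invr_gt0 ?exprn_gt0 //.
by move=> h; apply/eqP; rewrite -sqrf_eq0; apply/eqP; nra.
Qed.


Lemma pair_zero (al be ga : C) : 0 <= ga ->
  (forall t : C, 0 <= t^* * al + t * be + t * t^* * ga) -> al = 0 /\ be = 0.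
Proof.
case: al => a1 a2; case: be => b1 b2; case: ga => g1 g2.
rewrite lecE /= => /andP[/eqP g20 g10] H.
have H1 s := H (s +i* 0)%C.
have H2 s := H (0 +i* s)%C.
have E1 : forall s, 0 <= s * (a1 + b1) + s ^+ 2 * g1 /\ s * (a2 + b2) = 0.
  move=> s; have := H1 s; rewrite /= lecE /=.
  move/andP=> [/eqP h1 h2]; rewrite g20 expr2 in h1 h2 *; split; [nra|nra].
have E2 : forall s, 0 <= s * (a2 - b2) + s ^+ 2 * g1 /\ s * (b1 - a1) = 0.
  move=> s; have := H2 s; rewrite /= lecE /=.
  move/andP=> [/eqP h1 h2]; rewrite g20 expr2 in h1 h2 *; split; [nra|nra].
have q1 := @quad_zero _ _ g10 (fun s => (E1 s).1).
have q2 := @quad_zero _ _ g10 (fun s => (E2 s).1).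
have r1 := (E1 1).2; have r2 := (E2 1).2.
rewrite !mul1r in r1 r2.
have ea1 : a1 = 0 by lra.
have ea2 : a2 = 0 by lra.
have eb1 : b1 = 0 by lra.
have eb2 : b2 = 0 by lra.
by rewrite ea1 ea2 eb1 eb2.
Qed.


Definition qf (T : finType) (v w : T -> C) (A : T -> T -> C) :=
  \sum_a \sum_b (v a)^* * A a b * w b.

Definition psd (T : finType) (A : T -> T -> C) := forall v, 0 <= qf v v A.

Lemma qf_expand (T : finType) (A : T -> T -> C) (v w : T -> C) (t : C) :
  qf (fun a => v a + t * w a) (fun a => v a + t * w a) A =
  qf v v A + t^* * qf w v A + t * qf v w A + t * t^* * qf w w A.
Proof.
rewrite /qf !mulr_sumr -!big_split /=; apply eq_bigr => a _.
rewrite !mulr_sumr -!big_split /=; apply eq_bigr => b _.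
rewrite rmorphD rmorphM /=; ring.
Qed.

Lemma psd_zero_vec (T : finType) (A : T -> T -> C) (v : T -> C) :
  psd A -> qf v v A = 0 -> forall w : T -> C, qf w v A = 0 /\ qf v w A = 0.
Proof.
move=> pA q0 w; apply: (pair_zero (pA w)) => t.
by have := pA (fun a => v a + t * w a); rewrite qf_expand q0 add0r.
Qed.

Lemma psd_decomp (T J : finType) (A : T -> T -> C) (c : J -> C) (z : J -> T -> C) :
  (forall j, 0 <= c j) ->
  (forall x y, A x y = \sum_j c j * z j x * (z j y)^*) -> psd A.
Proof.
move=> c0 hA v.
have -> : qf v v A = \sum_j c j * ((\sum_x (v x)^* * z j x) * (\sum_x (v x)^* * z j x)^*).
  rewrite /qf.
  transitivity (\sum_x \sum_y \sum_j c j * ((v x)^* * z j x * ((v y)^* * z j y)^*)).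
    apply eq_bigr => x _; apply eq_bigr => y _.
    rewrite hA mulr_sumr mulr_suml; apply eq_bigr => j _.
    rewrite rmorphM /= conjCK; ring.
  transitivity (\sum_j \sum_x \sum_y c j * ((v x)^* * z j x * ((v y)^* * z j y)^*)).
    rewrite [RHS]exchange_big /=; apply eq_bigr => x _; by rewrite [RHS]exchange_big.
  apply eq_bigr => j _; rewrite rmorph_sum /= big_distrlr /= mulr_sumr.
  by apply eq_bigr => x _; rewrite mulr_sumr.
apply: sumr_ge0 => j _; apply: mulr_ge0 => //; exact: mul_conjC_ge0.
Qed.



Lemma Cset_add (S : system R) (s : op S) x y : Cset s x -> Cset s y -> Cset s (x + y).
Proof.
move=> [s1 [h1 ->]] [s2 [h2 ->]]; exists (s1 ++ s2); split; last by rewrite big_cat.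
by move=> p; rewrite mem_cat => /orP[]; [apply: h1|apply: h2].
Qed.

Lemma Cset_zmul (S : system R) (s : op S) (k : int) x : Cset s x -> Cset s (k%:~R * x).
Proof.
move=> [s1 [h1 ->]]; exists [seq (k * p.1, p.2) | p <- s1]; split.
  by move=> p /mapP [q qin ->] /=; apply: h1.
rewrite big_map mulr_sumr; apply eq_bigr => p _ /=; by rewrite intrM mulrA.
Qed.

Lemma Cset0 (S : system R) (s : op S) : Cset s 0.
Proof. by exists [::]; split => //; rewrite big_nil. Qed.

Lemma Cset_sub (S S' : system R) (s : op S) (s' : op S') :
  (forall y, Dset s' y -> Cset s y) -> forall x, Cset s' x -> Cset s x.
Proof.
move=> H x [l [hl ->]]; elim: l hl => [|p l IH] hl; first by rewrite big_nil; apply: Cset0.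
rewrite big_cons; apply: Cset_add; last by apply: IH => q ql; apply: hl; rewrite in_cons ql orbT.
by apply: Cset_zmul; apply: H; apply: hl; rewrite in_cons eqxx.
Qed.

Definition mode_pres (X Y : system R) (F : op X -> op Y) :=
  forall (sg : op X) (c d : sidx Y), F sg c d != 0 ->
    exists a b : sidx X, sg a b != 0 /\ energy c - energy d = energy a - energy b.

Lemma case1_core (S S' : system R) (n : nat) (rho : op S) (rho' : op S')
   (F : op (tens S n) -> op S') :
  mode_pres F -> F (tpow n rho) = rho' -> forall x, Cset rho' x -> Cset rho x.
Proof.
move=> mF hF; apply: Cset_sub => y [c [d [nz ->]]].
have := mF (tpow n rho) c d; rewrite hF => /(_ (introN eqP nz)) [a [b [hab ->]]].
exists [seq (1%:Z, energy (a i) - energy (b i)) | i <- enum 'I_n]; split.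
  move=> p /mapP [i _ ->] /=; exists (a i), (b i); split => //.
  move=> h0; move: hab; rewrite /tpow (bigD1 i) //= h0 mul0r eqxx //.
transitivity (\sum_i (energy (a i) - energy (b i))); first by rewrite sumrB.
rewrite big_map /= big_enum /=; apply eq_bigr => i _; by rewrite mul1r.
Qed.



Lemma sum_enum_val (T : finType) (F : T -> C) :
  \sum_(a : T) F a = \sum_(i < #|T|) F (enum_val i).
Proof.
rewrite (reindex (@enum_val T predT)) /=; last exact/onW_bij/enum_val_bij.
by [].
Qed.

Lemma spectral_mx (k : nat) (A : 'M[C]_k) :
  (forall i j, A j i = (A i j)^*) ->
  exists (P : 'M[C]_k) (d : 'rV[C]_k),
   [/\ forall i j, A i j = \sum_l (P l i)^* * d 0 l * P l j,
       forall i j, \sum_l (P l i)^* * P l j = (i == j)%:R &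
       forall l l', \sum_i P l i * (P l' i)^* = (l == l')%:R].
Proof.
move=> hA.
have At : (A ^t*)%sesqui = A by apply/matrixP => i j; rewrite !mxE hA conjCK.
have nA : A \is normalmx by rewrite qualifE At.
have := orthomx_spectralP nA.
set P := spectralmx A; set d := spectral_diag A => eA.
have uP : P \is unitarymx by apply: spectral_unitarymx.
have iP := invmx_unitary uP.
exists P, d; split.
- move=> i j; rewrite [in LHS]eA iP mul_mx_diag !mxE; apply eq_bigr => l _.
  by rewrite !mxE.
- move=> i j; have := mulVmx (unitarymx_unit uP); rewrite iP => /matrixP /(_ i j).
  rewrite !mxE => <-; apply eq_bigr => l _; by rewrite !mxE.
- move=> l l'; have := unitarymxP uP => /matrixP /(_ l l').
  rewrite !mxE => <-; apply eq_bigr => i _; by rewrite !mxE.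
Qed.


Lemma spectral_state (S : system R) (rho : op S) : is_state rho -> full_rank rho ->
  exists m (mu : 'I_m -> C) (u : 'I_m -> sidx S -> C),
   [/\ forall j, 0 < mu j,
       forall a b, rho a b = \sum_j mu j * u j a * (u j b)^* &
       forall a b, ((a == b)%:R : C) = \sum_j u j a * (u j b)^*].
Proof.
move=> [hH hP htr] hfr.
pose A : 'M[C]_#|sidx S| := \matrix_(i, j) rho (enum_val i) (enum_val j).
have hA : forall i j, A j i = (A i j)^* by move=> i j; rewrite !mxE hH.
have [P [d [eA eI eO]]] := spectral_mx hA.
pose u l a := (P l (enum_rank a))^*.
pose mu l := d 0 l.
have dec : forall a b, rho a b = \sum_j mu j * u j a * (u j b)^*.
  move=> a b; rewrite -[a]enum_rankK -[b]enum_rankK.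
  have := eA (enum_rank a) (enum_rank b); rewrite !mxE => ->.
  apply eq_bigr => l _; rewrite /u /mu !enum_rankK conjCK; ring.
have idd : forall a b, ((a == b)%:R : C) = \sum_j u j a * (u j b)^*.
  move=> a b; rewrite -(inj_eq (@enum_rank_inj _)) -eI.
  apply eq_bigr => l _; by rewrite /u conjCK.
have ort : forall l l', \sum_a (u l a)^* * u l' a = (l == l')%:R.
  move=> l l'; rewrite -eO sum_enum_val; apply eq_bigr => i _.
  by rewrite /u conjCK enum_valK.
exists _, mu, u; split => //.
move=> l.
have qfl : \sum_a \sum_b (u l a)^* * rho a b * u l b = mu l.
  transitivity (\sum_j mu j * ((\sum_a (u l a)^* * u j a) * (\sum_b (u j b)^* * u l b))).
    transitivity (\sum_a \sum_b \sum_j mu j * ((u l a)^* * u j a * ((u j b)^* * u l b))).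
      apply eq_bigr => a _; apply eq_bigr => b _; rewrite dec mulr_sumr mulr_suml.
      apply eq_bigr => j _; ring.
    apply/esym; under eq_bigr do rewrite big_distrlr /= mulr_sumr.
    under eq_bigr do under eq_bigr do rewrite mulr_sumr.
    rewrite exchange_big /=; apply eq_bigr => a _; by rewrite exchange_big.
  under eq_bigr => j _ do rewrite ort ort.
  rewrite (bigD1 l) //= eqxx big1 ?addr0; first by rewrite mulr1 mulr1.
  by move=> j /negbTE ne; rewrite ne !mulr0.
have mu0 : 0 <= mu l by rewrite -qfl; apply: hP.
rewrite lt_def mu0 andbT; apply/negP => /eqP m0.
have ul0 : u l = (fun _ => 0).
  apply: hfr => a.
  transitivity (\sum_j mu j * u j a * (\sum_b (u j b)^* * u l b)).
    under eq_bigr do rewrite dec mulr_suml.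
    rewrite exchange_big /=; apply eq_bigr => j _; rewrite mulr_sumr.
    apply eq_bigr => b _; ring.
  under eq_bigr => j _ do rewrite ort.
  rewrite (bigD1 l) //= m0 !mul0r add0r big1 //.
  by move=> j /negbTE ne; rewrite ne mulr0.
have := ort l l; rewrite eqxx ul0 big1 ?mulr0 // => /esym /eqP; by rewrite oner_eq0.
Qed.



Lemma lower_bound m (mu : 'I_m -> C) : (forall j, 0 < mu j) ->
  exists lam : C, 0 < lam /\ forall j, lam <= mu j.
Proof.
move=> hm.
exists (\big[Order.min/1%R]_j @complex.Re R (mu j))%:C%C; split.
  rewrite ltcR; apply/bigmin_gtP; split => // j _.
  by have := hm j; rewrite ltcE /= => /andP[].
move=> j; have := hm j; rewrite ltcE /= => /andP[/eqP hi _].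
rewrite lecE /= -hi eqxx /=; exact: bigmin_le.
Qed.

Lemma eq_prod_ffun (T : finType) n (x y : {ffun 'I_n -> T}) :
  ((x == y)%:R : C) = \prod_i ((x i == y i)%:R).
Proof.
have [->|ne] := eqVneq x y.
  by rewrite big1 // => i _; rewrite eqxx.
have [i hi] : exists i, x i != y i.
  apply/existsP; apply: contraNT ne; rewrite negb_exists => /forallP h.
  by apply/eqP/ffunP => i; apply/eqP; have := h i; rewrite negbK.
by rewrite (bigD1 i) //= (negbTE hi) mul0r.
Qed.

Lemma tens_psd (S : system R) n (rho : op S) m (mu : 'I_m -> C) (u : 'I_m -> sidx S -> C) :
   (forall j, 0 < mu j) ->
   (forall a b, rho a b = \sum_j mu j * u j a * (u j b)^*) ->
   (forall a b, ((a == b)%:R : C) = \sum_j u j a * (u j b)^*) ->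
   exists lam : C, 0 < lam /\
     psd (fun x y : sidx (tens S n) => tpow n rho x y - lam * (x == y)%:R).
Proof.
move=> hmu dec idd.
have [l [l0 hl]] := lower_bound hmu.
exists (l ^+ n); split; first exact: exprn_gt0.
apply: (@psd_decomp (sidx (tens S n)) {ffun 'I_n -> 'I_m} _
   (fun J => \prod_i mu (J i) - l ^+ n) (fun J (x : sidx (tens S n)) => \prod_i u (J i) (x i))).
  move=> J; rewrite subr_ge0.
  have -> : l ^+ n = \prod_(i < n) l by rewrite prodr_const card_ord.
  by apply: ler_prod => i _; rewrite ltW //= hl.
move=> x y.
have e1 : tpow n rho x y = \prod_i \sum_j mu j * u j (x i) * (u j (y i))^*.
  by apply eq_bigr => i _; rewrite dec.
have e2 : ((x == y)%:R : C) = \prod_i \sum_j u j (x i) * (u j (y i))^*.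
  by rewrite eq_prod_ffun; apply eq_bigr => i _; rewrite idd.
rewrite e1 e2.
rewrite !bigA_distr_bigA /= mulr_sumr -sumrB; apply eq_bigr => J _.
rewrite rmorph_prod /= !big_split /=; ring.
Qed.



Lemma qf_sub (T : finType) (A B : T -> T -> C) l (v : T -> C) :
  qf v v (fun x y => A x y - l * B x y) = qf v v A - l * qf v v B.
Proof.
rewrite /qf mulr_sumr -sumrB; apply eq_bigr => a _.
rewrite mulr_sumr -sumrB; apply eq_bigr => b _; ring.
Qed.

Lemma qf_unit_l (T : finType) (A : T -> T -> C) (v : T -> C) b :
  qf (fun a => (a == b)%:R) v A = \sum_d A b d * v d.
Proof.
rewrite /qf (bigD1 b) //= [X in _ + X]big1 ?addr0.
  by apply eq_bigr => d _; rewrite eqxx rmorph1 mul1r.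
by move=> a /negbTE ne; rewrite big1 // => d _; rewrite ne rmorph0 !mul0r.
Qed.

Lemma qf_unit_r (T : finType) (A : T -> T -> C) (v : T -> C) b :
  qf v (fun a => (a == b)%:R) A = \sum_c (v c)^* * A c b.
Proof.
rewrite /qf; apply eq_bigr => c _; rewrite (bigD1 b) //= [X in _ + X]big1 ?addr0.
  by rewrite eqxx mulr1.
by move=> d /negbTE ne; rewrite ne mulr0.
Qed.

Lemma psd_id (T : finType) : psd (fun x y : T => ((x == y)%:R : C)).
Proof.
apply: (@psd_decomp T T _ (fun _ => 1) (fun j x => (j == x)%:R)) => // x y.
rewrite (bigD1 x) //= [X in _ + X]big1 ?addr0; first by rewrite eqxx mul1r mul1r rmorph_nat eq_sym.
by move=> j /negbTE ne; rewrite ne mulr0 mul0r.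
Qed.

Lemma evolve_id (X : system R) t : evolve t (fun x y : sidx X => ((x == y)%:R : C)) = (fun x y => (x == y)%:R).
Proof.
apply/funext => x; apply/funext => y; rewrite /evolve.
have [->|ne] := eqVneq x y; last by rewrite mulr0 mul0r.
by rewrite mulr1 expiNK.
Qed.

Lemma case2_core (X S' : system R) (F : op X -> op S') (P : op X) (rho' : op S')
    (psi : sidx S' -> C) (lam : C) :
 (forall A, psd A -> psd (F A)) ->
 (forall A B l, F (fun x y => A x y - l * B x y) = (fun c d => F A c d - l * F B c d)) ->
 covariant F ->
 (forall A, \sum_c F A c c = \sum_x A x x) ->
 0 < lam -> psd (fun x y => P x y - lam * (x == y)%:R) ->
 F P = rho' -> rho' = (fun a b => psi a * (psi b)^*) -> \sum_a rho' a a = 1 ->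
 sidx X -> coherent rho' -> False.
Proof.
move=> Fpsd Flin Fcov Ftr lam0 hP FP erho tr1 x0 [t ht].
pose Id := fun x y : sidx X => ((x == y)%:R : C).
pose Q := F Id.
have psdQ : psd Q by apply: Fpsd; apply: psd_id.
have hD : psd (fun c d => rho' c d - lam * Q c d) by rewrite -FP -Flin; apply: Fpsd.
have N1 : \sum_a (psi a)^* * psi a = 1 by rewrite -tr1 erho; apply eq_bigr => a _; rewrite mulrC.
have perp : forall v, \sum_a (psi a)^* * v a = 0 -> forall w, qf w v Q = 0 /\ qf v w Q = 0.
  move=> v hv; apply: psd_zero_vec => //.
  have r0 : qf v v rho' = 0.
    rewrite erho /qf.
    transitivity ((\sum_a (v a)^* * psi a) * (\sum_b (psi b)^* * v b)).
      rewrite big_distrlr /=; apply eq_bigr => a _; apply eq_bigr => b _; ring.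
    by rewrite hv mulr0.
  have := hD v; rewrite qf_sub r0 sub0r oppr_ge0 pmulr_rle0 // => h.
  by apply/le_anti; rewrite h psdQ.
pose r a := fun d => ((d == a)%:R : C) - (psi a)^* * psi d.
have rperp : forall a, \sum_d (psi d)^* * r a d = 0.
  move=> a; rewrite /r; under eq_bigr do rewrite mulrBr; rewrite sumrB.
  rewrite (bigD1 a) //= [X in (_ + X) - _]big1 ?addr0; last by move=> d /negbTE ne; rewrite ne mulr0.
  rewrite eqxx mulr1 (eq_bigr (fun d => (psi a)^* * ((psi d)^* * psi d))).
    by rewrite -mulr_sumr N1 mulr1 subrr.
  by move=> d _; ring.
have e1 : forall b a, Q b a = (psi a)^* * \sum_d Q b d * psi d.
  move=> b a; have := (perp _ (rperp a) (fun c => (c == b)%:R)).1.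
  rewrite qf_unit_l /r.
  have -> : \sum_d Q b d * ((d == a)%:R - (psi a)^* * psi d) =
     Q b a - (psi a)^* * \sum_d Q b d * psi d.
    under eq_bigr do rewrite mulrBr; rewrite sumrB.
    rewrite (bigD1 a) //= [X in (_ + X) - _]big1 ?addr0; last by move=> d /negbTE ne; rewrite ne mulr0.
    rewrite eqxx mulr1 mulr_sumr; congr (_ - _); apply eq_bigr => d _; ring.
  by move/eqP; rewrite subr_eq0 => /eqP.
have e2 : forall b d, Q b d = psi b * \sum_c (psi c)^* * Q c d.
  move=> b d; have := (perp _ (rperp b) (fun c => (c == d)%:R)).2.
  rewrite qf_unit_r /r.
  have -> : \sum_c ((c == b)%:R - (psi b)^* * psi c)^* * Q c d =
     Q b d - psi b * \sum_c (psi c)^* * Q c d.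
    under eq_bigr do rewrite rmorphB rmorphM /= conjCK mulrBl rmorph_nat; rewrite sumrB.
    rewrite (bigD1 b) //= [X in (_ + X) - _]big1 ?addr0; last by move=> c /negbTE ne; rewrite ne mul0r.
    rewrite eqxx mul1r mulr_sumr; congr (_ - _); apply eq_bigr => c _; ring.
  by move/eqP; rewrite subr_eq0 => /eqP.
pose k := \sum_d (\sum_c (psi c)^* * Q c d) * psi d.
have eQ : Q = fun b a => k * rho' b a.
  apply/funext => b; apply/funext => a; rewrite e1 erho /k.
  transitivity ((psi a)^* * \sum_d psi b * (\sum_c (psi c)^* * Q c d) * psi d).
    congr (_ * _); apply eq_bigr => d _; by rewrite {1}e2.
  rewrite mulr_suml mulr_sumr; apply eq_bigr => d _.
  move: (\sum_c _) (psi a) (psi b) (psi d) => s1 s2 s3 s4; move: (s2^*) => s5.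
  have H4 : forall x y z w : C, x * (y * z * w) = z * w * (y * x) by move=> *; ring.
  exact: H4.
have k0 : k != 0.
  have := Ftr Id; rewrite -/Q eQ -mulr_sumr tr1 mulr1 => ->.
  rewrite /Id (eq_bigr (fun _ => 1)); last by move=> x _; rewrite eqxx.
  rewrite sumr_const pnatr_eq0 -lt0n; apply/card_gt0P; by exists x0.
apply: ht; apply/funext => a; apply/funext => b.
have := Fcov Id t; rewrite evolve_id -/Q eQ => /(congr1 (fun f => f a b)).
rewrite /evolve => /eqP; rewrite -subr_eq0.
have -> : k * rho' a b - expi (- (energy a * t)) * (k * rho' a b) * expi (energy b * t) =
   k * (rho' a b - expi (- (energy a * t)) * rho' a b * expi (energy b * t)) by ring.
rewrite mulf_eq0 (negbTE k0) /= subr_eq0 => /eqP.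
by move=> hh; rewrite -hh.
Qed.



Lemma expi_eq (x y : R) : expi x = expi y -> expi (x - y) = 1.
Proof. by move=> h; rewrite -expiD h expiD subrr expi0. Qed.

Section Chan.
Variables (X Y : system R) (L : op X -> op Y).
Hypothesis hL : is_channel L.

Lemma chan_lin (A B : op X) (l : C) :
  L (fun x y => A x y - l * B x y) = (fun c d => L A c d - l * L B c d).
Proof.
have [m [K [_ eL]]] := hL.
apply/funext => c; apply/funext => d; rewrite !eL.
rewrite mulr_sumr -sumrB; apply eq_bigr => k _.
rewrite mulr_sumr -sumrB; apply eq_bigr => a _.
rewrite mulr_sumr -sumrB; apply eq_bigr => b _; ring.
Qed.

Lemma chan_scale (A : op X) (l : C) :
  L (fun x y => l * A x y) = (fun c d => l * L A c d).
Proof.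
have [m [K [_ eL]]] := hL.
apply/funext => c; apply/funext => d; rewrite !eL.
rewrite mulr_sumr; apply eq_bigr => k _.
rewrite mulr_sumr; apply eq_bigr => a _.
rewrite mulr_sumr; apply eq_bigr => b _; ring.
Qed.

Lemma chan_psd (A : op X) : psd A -> psd (L A).
Proof.
have [m [K [_ eL]]] := hL.
move=> pA v; rewrite /qf.
pose w k a := \sum_c (K k c a)^* * v c.
have -> : \sum_a \sum_b (v a)^* * L A a b * v b = \sum_k qf (w k) (w k) A.
  rewrite /qf /w.
  transitivity (\sum_c \sum_d \sum_k \sum_a \sum_b (v c)^* * K k c a * A a b * ((K k d b)^* * v d)).
    apply eq_bigr => c _; apply eq_bigr => d _; rewrite eL mulr_sumr mulr_suml.
    apply eq_bigr => k _; rewrite mulr_sumr mulr_suml; apply eq_bigr => a _.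
    rewrite mulr_sumr mulr_suml; apply eq_bigr => b _; ring.
  under eq_bigr => c _ do rewrite exchange_big /=.
  rewrite exchange_big /=.
  under eq_bigr => k _ do under eq_bigr => c _ do rewrite exchange_big /=.
  under eq_bigr => k _ do rewrite exchange_big /=.
  under eq_bigr => k _ do under eq_bigr => a _ do under eq_bigr => c _ do rewrite exchange_big /=.
  under eq_bigr => k _ do under eq_bigr => a _ do rewrite exchange_big /=.
  apply eq_bigr => k _; apply eq_bigr => a _; apply eq_bigr => b _.
  rewrite rmorph_sum /= !mulr_suml; apply eq_bigr => c _; rewrite mulr_sumr; apply eq_bigr => d _.
  rewrite rmorphM /= conjCK; ring.
by apply: sumr_ge0 => k _; apply: pA.
Qed.

Lemma chan_tr (A : op X) : \sum_c L A c c = \sum_x A x x.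
Proof.
have [m [K [hK eL]]] := hL.
transitivity (\sum_a \sum_b A a b * (\sum_k \sum_c (K k c b)^* * K k c a)).
  transitivity (\sum_c \sum_k \sum_a \sum_b K k c a * A a b * (K k c b)^*).
    by apply eq_bigr => c _; rewrite eL.
  rewrite exchange_big /=.
  under eq_bigr => k _ do rewrite exchange_big /=.
  under eq_bigr => k _ do under eq_bigr => a _ do rewrite exchange_big /=.
  rewrite exchange_big /=.
  under eq_bigr => a _ do rewrite exchange_big /=.
  apply eq_bigr => a _; apply eq_bigr => b _; rewrite mulr_sumr; apply eq_bigr => k _.
  rewrite mulr_sumr; apply eq_bigr => c _; ring.
under eq_bigr => a _ do under eq_bigr => b _ do rewrite hK.
apply eq_bigr => a _; rewrite (bigD1 a) //= [X in _ + X]big1 ?addr0.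
  by rewrite eqxx mulr1.
by move=> b /negbTE ne; rewrite ne mulr0.
Qed.

Lemma sum_neq0 (T : finType) (F : T -> C) : \sum_a F a != 0 -> exists a, F a != 0.
Proof.
move=> h; case: (pickP (fun a => F a != 0)) => [a ha|h0]; first by exists a.
by move: h; rewrite big1 ?eqxx // => a _; apply/eqP; move: (h0 a) => /negbFE.
Qed.

Lemma chan_mode : covariant L -> mode_pres L.
Proof.
move=> hc.
have [m [K [hK eL]]] := hL.
move=> sg c d.
pose M a b := \sum_k K k c a * (K k d b)^*.
have e : forall sg, L sg c d = \sum_a \sum_b M a b * sg a b.
  move=> s; rewrite eL exchange_big /=; apply eq_bigr => a _.
  rewrite exchange_big /=; apply eq_bigr => b _; rewrite /M mulr_suml.
  apply eq_bigr => k _; ring.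
rewrite e => /sum_neq0 [a /sum_neq0 [b]].
rewrite mulf_eq0 negb_or => /andP[hM hs].
exists a, b; split => //.
pose D := fun u v : sidx X => (((u == a) && (v == b))%:R : C).
have LD : L D c d = M a b.
  rewrite e (bigD1 a) //= [X in _ + X]big1 ?addr0.
    rewrite (bigD1 b) //= [X in _ + X]big1 ?addr0; first by rewrite /D !eqxx mulr1.
    by move=> b' /negbTE ne; rewrite /D ne andbF mulr0.
  by move=> a' /negbTE ne; rewrite big1 // => b' _; rewrite /D ne mulr0.
have eD : forall t, evolve t D = (fun u v => (expi (- (energy a * t)) * expi (energy b * t)) * D u v).
  move=> t; apply/funext => u; apply/funext => v; rewrite /evolve /D.
  case hb: ((u == a) && (v == b)); last by rewrite !mulr0 mul0r.
  by move/andP: hb => [/eqP -> /eqP ->]; rewrite !mulr1.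
have ht : forall t, expi (- (energy a * t)) * expi (energy b * t) =
                    expi (- (energy c * t)) * expi (energy d * t).
  move=> t; have := hc D t; rewrite eD chan_scale => /(congr1 (fun f => f c d)).
  rewrite /evolve LD => h.
  apply: (mulIf hM); rewrite h; ring.
have : (energy c - energy d) - (energy a - energy b) = 0.
  apply: expi_eq1 => t.
  have := ht t; rewrite !expiD => /expi_eq.
  by congr (expi _ = _); ring.
by move/eqP; rewrite subr_eq0 => /eqP.
Qed.

End Chan.


Section Marg.
Variables (S : system R) (k : nat) (j : 'I_k).
Local Notation T := {ffun 'I_k -> sidx S}.

Definition agr (x y : T) := [forall i, (i != j) ==> (x i == y i)].

Lemma agr_sym x y : agr x y = agr y x.
Proof. by apply/forallP/forallP => h i; apply/implyP => hi; rewrite eq_sym (implyP (h i) hi). Qed.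

Lemma agr_trans x y z : agr x y -> agr y z -> agr x z.
Proof.
move=> /forallP h1 /forallP h2; apply/forallP => i; apply/implyP => hi.
by rewrite (eqP (implyP (h1 i) hi)) (implyP (h2 i) hi).
Qed.

Lemma agr_eq x y : agr x y -> x j = y j -> x = y.
Proof.
move=> /forallP h e; apply/ffunP => i; case: (eqVneq i j) => [->//|hi].
exact: (eqP (implyP (h i) hi)).
Qed.

Lemma agr_energy x y : agr x y ->
  energy (x : sidx (tens S k)) - energy (y : sidx (tens S k)) = energy (x j) - energy (y j).
Proof.
move=> /forallP h; rewrite /= (bigD1 j) //= [X in _ - X](bigD1 j) //=.
have -> : \sum_(i < k | i != j) energy (x i) = \sum_(i < k | i != j) energy (y i).
  by apply eq_bigr => i hi; rewrite (eqP (implyP (h i) hi)).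
by rewrite opprD addrACA subrr addr0.
Qed.

Lemma marginalE (w : op (tens S k)) a b :
  marginal j w a b = \sum_(x : T | x j == a) \sum_(y : T | (y j == b) && agr x y) w x y.
Proof. by []. Qed.

Lemma sum_part (F : T -> C) (P : pred T) :
  \sum_(a : sidx S) \sum_(x : T | (x j == a) && P x) F x = \sum_(x : T | P x) F x.
Proof.
under eq_bigr do rewrite big_mkcond /=.
rewrite exchange_big /= [RHS]big_mkcond /=; apply eq_bigr => x _.
rewrite (bigD1 (x j)) //= eqxx /= [X in _ + X]big1 ?addr0 //.
by move=> a /negbTE ne; rewrite eq_sym ne.
Qed.


Lemma sum_neq0P (U : finType) (P : pred U) (F : U -> C) :
  \sum_(a | P a) F a != 0 -> exists a, P a && (F a != 0).
Proof.
move=> h; case: (pickP (fun a => P a && (F a != 0))) => [a ha|h0]; first by exists a.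
move: h; rewrite big1 ?eqxx // => a Pa; apply/eqP; move: (h0 a); rewrite Pa /=.
by move/negbFE.
Qed.

Lemma marg_lin (A B : op (tens S k)) (l : C) :
  marginal j (fun x y => A x y - l * B x y) = (fun a b => marginal j A a b - l * marginal j B a b).
Proof.
apply/funext => a; apply/funext => b; rewrite !marginalE.
rewrite mulr_sumr -sumrB; apply eq_bigr => x _.
rewrite mulr_sumr -sumrB; apply eq_bigr => y _; by [].
Qed.

Lemma marg_one (w : op (tens S k)) (x : T) a :
  x j == a -> \sum_(y : T | (y j == a) && agr x y) w x y = w x x.
Proof.
move=> /eqP ha; apply: big_pred1 => y /=.
apply/andP/eqP => [[/eqP hy hg]|->]; first by apply/esym/agr_eq => //; rewrite hy.
split; first by rewrite ha.
by apply/forallP => i; apply/implyP.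
Qed.

Lemma marg_tr (w : op (tens S k)) : \sum_a marginal j w a a = \sum_x w x x.
Proof.
transitivity (\sum_a \sum_(x : T | (x j == a) && true) w x x).
  apply eq_bigr => a _; rewrite marginalE; apply: eq_big => x; first by rewrite andbT.
  by move=> hx; rewrite marg_one.
by rewrite sum_part.
Qed.

Lemma marg_evolve (w : op (tens S k)) t :
  marginal j (evolve t w) = evolve t (marginal j w).
Proof.
apply/funext => a; apply/funext => b; rewrite /evolve !marginalE.
rewrite mulr_sumr mulr_suml; apply eq_bigr => x /eqP hx.
rewrite mulr_sumr mulr_suml; apply eq_bigr => y /andP[/eqP hy hg].
have := agr_energy hg; rewrite hx hy => he.
have key : expi (- (@energy _ (tens S k) x * t)) * expi (@energy _ (tens S k) y * t) =
           expi (- (energy a * t)) * expi (energy b * t).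
  rewrite !expiD; transitivity (expi (- ((energy a - energy b) * t))).
    by rewrite -he; congr expi; ring.
  by congr expi; ring.
have H : forall p q r s u : C, p * q = r * s -> p * u * q = r * u * s.
  move=> p q r s0 u h; transitivity (u * (p * q)); first ring.
  rewrite h; ring.
exact: H.
Qed.

Lemma marg_mode (w : op (tens S k)) a b : marginal j w a b != 0 ->
  exists x y : sidx (tens S k), w x y != 0 /\ energy x - energy y = energy a - energy b.
Proof.
rewrite marginalE => /sum_neq0P [x /andP [/eqP hx /sum_neq0P [y /andP[/andP [/eqP hy hg] hw]]]].
by exists x, y; split => //; rewrite agr_energy // hx hy.
Qed.


Lemma agr_count (c0 : sidx S) (x y : T) :
  \sum_(z : T | z j == c0) (((agr x z)%:R : C) * (agr y z)%:R) = (agr x y)%:R.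
Proof.
have [h|h] := boolP (agr x y).
  pose z0 : T := [ffun i => if i == j then c0 else x i].
  have z0j : z0 j == c0 by rewrite ffunE eqxx.
  have hx0 : agr x z0.
    apply/forallP => i; apply/implyP => hi; by rewrite ffunE (negbTE hi).
  have hy0 : agr y z0 by apply: agr_trans hx0; rewrite agr_sym.
  rewrite (bigD1 z0) //= hx0 hy0 mulr1 [X in _ + X]big1 ?addr0 //.
  move=> z /andP[hz nz].
  have [hxz|hxz] := boolP (agr x z); last by rewrite mul0r.
  exfalso; move/negP: nz; apply; apply/eqP/esym/agr_eq; last by rewrite (eqP hz) (eqP z0j).
  by apply: agr_trans hxz; rewrite agr_sym.
rewrite big1 // => z _.
have [hxz|hxz] := boolP (agr x z); last by rewrite mul0r.
have [hyz|hyz] := boolP (agr y z); last by rewrite mulr0.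
by move/negP: h; case; apply: agr_trans hxz _; rewrite agr_sym.
Qed.

Lemma marg_psd (c0 : sidx S) (w : op (tens S k)) : psd w -> psd (marginal j w).
Proof.
move=> pw v.
have E1 : qf v v (marginal j w) =
   \sum_(x : T) \sum_(y : T | agr x y) (v (x j))^* * w x y * v (y j).
  rewrite /qf.
  transitivity (\sum_a \sum_b \sum_(x : T | x j == a) \sum_(y : T | (y j == b) && agr x y)
      (v (x j))^* * w x y * v (y j)).
    apply eq_bigr => a _; apply eq_bigr => b _; rewrite marginalE mulr_sumr mulr_suml.
    apply eq_bigr => x /eqP hx; rewrite mulr_sumr mulr_suml; apply eq_bigr => y /andP[/eqP hy _].
    by rewrite hx hy.
  under eq_bigr do rewrite exchange_big /=.
  transitivity (\sum_a \sum_(x : T | (x j == a) && true) \sum_(y : T | agr x y)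
      (v (x j))^* * w x y * v (y j)).
    apply eq_bigr => a _; apply: eq_big => x; first by rewrite andbT.
    by move=> _; rewrite sum_part.
  by rewrite sum_part.
have E2 : \sum_(x : T) \sum_(y : T | agr x y) (v (x j))^* * w x y * v (y j) =
   \sum_(z : T | z j == c0) qf (fun x => (agr x z)%:R * v (x j)) (fun x => (agr x z)%:R * v (x j)) w.
  rewrite /qf.
  transitivity (\sum_(x : T) \sum_(y : T) \sum_(z : T | z j == c0)
      (((agr x z)%:R : C) * (agr y z)%:R) * ((v (x j))^* * w x y * v (y j))).
    apply eq_bigr => x _; rewrite big_mkcond /=; apply eq_bigr => y _.
    by rewrite -mulr_suml agr_count; case: (agr x y); rewrite ?mul1r ?mul0r.
  transitivity (\sum_(x : T) \sum_(z : T | z j == c0) \sum_(y : T) 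
      (((agr x z)%:R : C) * (agr y z)%:R) * ((v (x j))^* * w x y * v (y j))).
    by apply eq_bigr => x _; rewrite exchange_big.
  rewrite exchange_big /=; apply eq_bigr => z _; apply eq_bigr => x _; apply eq_bigr => y _.
  rewrite rmorphM /= rmorph_nat; ring.
rewrite E1 E2; apply: sumr_ge0 => z _; exact: pw.
Qed.

End Marg.


Lemma limsup_zero (u : (\bar R)^nat) :
  (forall n, (0 < n)%N -> (0 <= u n)%E /\ (u n <= (n%:R^-1)%:E)%E) -> limn_esup u = 0%E.
Proof.
move=> h; rewrite limn_esup_lim (cvg_lim (@ereal_hausdorff R) (@cvg_esups_inf R u)) //.
apply/eqP; rewrite eq_le; apply/andP; split.
  have key : forall e : R, 0 < e -> (ereal_inf (range (esups u)) <= e%:E)%E.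
    move=> e e0.
    pose n := (Num.truncn (e^-1)).+1.
    have n0 : (0 < n)%N by [].
    have hn : n%:R^-1 <= e.
      rewrite -[e]invrK lef_pV2 ?posrE ?invr_gt0 ?ltr0n //.
      exact: ltW (truncnS_gt _).
    apply: (@le_trans _ _ (esups u n)); first by apply: ereal_inf_lbound; exists n.
    apply: ge_ereal_sup => _ [k /= nk <-].
    have k0 : (0 < k)%N by apply: leq_trans nk.
    apply: (le_trans (h k k0).2); rewrite lee_fin; apply: le_trans hn.
    by rewrite lef_pV2 ?posrE ?ltr0n // ler_nat.
  move: key; case: (ereal_inf _) => [r| |] //= key.
  - rewrite lee_fin; apply/negP => /negP; rewrite -ltNge => r0.
    have := key (r / 2); rewrite lee_fin => /(_ ltac:(lra)); lra.
  - by have := key 1 ltr01.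
apply: le_ereal_inf_tmp => _ [n _ <-].
apply: (@le_trans _ _ (u n.+1)); first exact: (h n.+1 isT).1.
by apply: ereal_sup_ubound; exists n.+1 => //=; rewrite leqnSn.
Qed.


End Dev.

Section Fin.
Variable R : realType.
Local Notation C := R[i].

Lemma state_elem (S : system R) (rho : op S) : is_state rho -> sidx S.
Proof.
move=> [_ _ tr1].
case: (pickP (fun _ : sidx S => true)) => [a _|h0]; first exact: a.
exfalso; move: tr1; rewrite big_pred0 // => /esym/eqP; by rewrite oner_eq0.
Qed.

Lemma no_map (S S' : system R) (n : nat) (rho : op S) (rho' : op S')
    (F : op (tens S n) -> op S') :
  is_state rho -> is_state rho' ->
  ((exists x, Cset rho' x /\ ~ Cset rho x) \/
   (is_pure rho' /\ coherent rho' /\ full_rank rho)) ->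
  mode_pres F -> (forall A, psd A -> psd (F A)) ->
  (forall A B l, F (fun x y => A x y - l * B x y) = (fun c d => F A c d - l * F B c d)) ->
  covariant F -> (forall A, \sum_c F A c c = \sum_x A x x) ->
  F (tpow n rho) = rho' -> False.
Proof.
move=> sr sr' [[x [hx nx]]|[[psi epsi] [coh fr]]] mF pF lF cF tF hF.
  by apply: nx; apply: (case1_core mF hF).
have [m [mu [u [hmu dec idd]]]] := spectral_state sr fr.
have [lam [lam0 hP]] := tens_psd n hmu dec idd.
have a0 := state_elem sr.
have x0 : sidx (tens S n) := [ffun _ => a0].
have [_ _ tr1] := sr'.
exact: (case2_core pF lF cF tF lam0 hP hF epsi tr1 x0 coh).
Qed.


Lemma trace_chan (X S' : system R) :
  exists L : op X -> op (tens S' 0), is_channel L /\ covariant L.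
Proof.
exists (fun s => fun _ _ => \sum_x s x x); split.
  exists #|sidx X|, (fun k (c : sidx (tens S' 0)) a => (((enum_val k) == a)%:R : C)); split.
    move=> a b.
    transitivity (\sum_(k < #|sidx X|) ((((enum_val k) == a)%:R : C)^* * ((enum_val k) == b)%:R)).
      apply eq_bigr => k _; rewrite sumr_const card_ffun card_ord expn0.
      by rewrite mulr1n.
    rewrite -(@sum_enum_val R (sidx X) (fun x => (((x == a)%:R : C)^* * (x == b)%:R))).
    rewrite (bigD1 a) //= [X in _ + X]big1 ?addr0.
      by rewrite eqxx rmorph1 mul1r eq_sym.
    by move=> x /negbTE ne; rewrite ne rmorph0 mul0r.
  move=> sg; apply/funext => c; apply/funext => d.
  rewrite (@sum_enum_val R (sidx X) (fun x => sg x x)); apply eq_bigr => k _.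
  rewrite (bigD1 (enum_val k)) //= [X in _ + X]big1 ?addr0; last first.
    by move=> a /negbTE ne; rewrite big1 // => b _; rewrite eq_sym ne !mul0r.
  rewrite (bigD1 (enum_val k)) //= [X in _ + X]big1 ?addr0; last first.
    by move=> b /negbTE ne; rewrite eq_sym ne rmorph0 mulr0.
  by rewrite eqxx /= !mulr1n rmorph1 mulr1 mul1r.
move=> sg t; apply/funext => c; apply/funext => d; rewrite /evolve /=.
rewrite !big_ord0 !mul0r oppr0 expi0 mul1r mulr1.
apply eq_bigr => x _.
have H : forall p q s : C, p * q = 1 -> p * s * q = s.
  by move=> p q s h; rewrite mulrAC h mul1r.
by apply: H; apply: expiNK.
Qed.


Lemma ach0 (S S' : system R) (rho : op S) (rho' : op S') n : achievable rho rho' n 0.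
Proof.
rewrite /achievable; split => //.
rewrite mul0r truncn0.
have [L [hL cL]] := trace_chan (tens S n) S'.
by exists L; split => // -[].
Qed.

Lemma ach_small (S S' : system R) (rho : op S) (rho' : op S') n r :
  is_state rho -> is_state rho' ->
  ((exists x, Cset rho' x /\ ~ Cset rho x) \/
   (is_pure rho' /\ coherent rho' /\ full_rank rho)) ->
  (0 < n)%N -> achievable rho rho' n r -> Num.truncn (r * n%:R) = 0%N.
Proof.
move=> sr sr' hyp n0 [r0 [L [hL cL hm]]].
move: (Num.truncn (r * n%:R)) L hL cL hm => k L hL cL hm.
case: (posnP k) => [//|kpos]; exfalso.
pose j := Ordinal kpos.
have c0 := state_elem sr'.
apply: (@no_map S S' n rho rho' (fun sg => marginal j (L sg)) sr sr' hyp).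
- move=> sg c d /marg_mode [x [y [hxy he]]].
  have [a [b [hab he2]]] := chan_mode hL cL hxy.
  by exists a, b; split => //; rewrite -he he2.
- by move=> A pA; apply: (marg_psd j c0); apply: chan_psd.
- by move=> A B l; rewrite chan_lin // marg_lin.
- by move=> sg t; rewrite /= cL marg_evolve.
- by move=> A; rewrite marg_tr chan_tr.
- exact: hm.
Qed.

End Fin.

Theorem mainTheorem4 (R : realType) (S S' : system R)
    (rho : op S) (rho' : op S') :
  is_state rho -> is_state rho' ->
  ((exists x, Cset rho' x /\ ~ Cset rho x) \/
   (is_pure rho' /\ coherent rho' /\ full_rank rho)) ->
  (forall n : nat, (1 <= n)%N ->
     ~ exists L : op (tens S n) -> op S',
         [/\ is_channel L, covariant L & L (tpow n rho) = rho']) /\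
  rate0 rho rho' = 0%E.
Proof.
move=> sr sr' hyp; split.
  move=> n n1 [L [hL cL hP]].
  exact: (no_map sr sr' hyp (chan_mode hL cL) (chan_psd hL) (chan_lin hL) cL (chan_tr hL) hP).
rewrite /rate0; apply: limsup_zero => n n0; split.
  by apply: ereal_sup_ubound; exists 0 => //; apply: ach0.
apply: ge_ereal_sup => _ [r hr <-]; rewrite lee_fin.
have := ach_small sr sr' hyp n0 hr => /truncn0Pn; rewrite -ltNge => h.
rewrite -div1r ler_pdivlMr ?ltr0n //; exact: ltW.
Qed.
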